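(* Let $L_n$ and $PL_n$ be as in the context and $n\ge 4$. The homomorphism $\phi_n:L_n\to\operatorname{Aut}(PL_n)$, $\phi_n(g)(x)=g^{-1}xg$ for $x\in PL_n$, is injective.
   Context: For $n\ge 2$, $L_n=\langle y_1,\dots,y_{n-1}\mid y_j^2=1\ (1\le j\le n-1),\ y_iy_{i+1}y_i=y_{i+1}y_iy_{i+1}\ (1\le i\le n-2)\rangle$ (no relations between $y_i,y_j$ with $|i-j|\ge 2$). Let $\pi:L_n\to S_n$ be the surjective homomorphism with $\pi(y_i)=(i\ i{+}1)$, the transposition, and $PL_n=\ker\pi$ (a normal subgroup, so conjugation restricts to automorphisms of $PL_n$). *)

(* Defs.v *)
(* L_n is presented concretely: elements are words in the
   generators y_0..y_{n-2} (indexed by 'I_n.-1), modulo the congruence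
   generated by the defining relations. Since every generator is an
   involution, positive words suffice, and the inverse of a word is its
   reversal. *)
From mathcomp Require Import all_boot all_fingroup.
Set Implicit Arguments. Unset Strict Implicit. Unset Printing Implicit Defensive.

(* words in the generators of L_n; generator y_{i+1} of the paper is index i *)
Definition word (n : nat) := seq 'I_n.-1.

Inductive Lrel (n : nat) : word n -> word n -> Prop :=
| Lrel_refl u : Lrel u u
| Lrel_sym u v : Lrel u v -> Lrel v u
| Lrel_trans u v w : Lrel u v -> Lrel v w -> Lrel u w
| Lrel_ctx u v a b : Lrel a b -> Lrel (u ++ a ++ v) (u ++ b ++ v)
| Lrel_inv (i : 'I_n.-1) : Lrel [:: i; i] [::]
| Lrel_braid (i j : 'I_n.-1) : val j = (val i).+1 -> Lrel [:: i; j; i] [:: j; i; j].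

Definition Linv (n : nat) (g : word n) : word n := rev g.

Lemma gen_lt (n : nat) (i : 'I_n.-1) : val i < n.
Proof. by case: n i => [|n] [i /= Hi] //; apply: leq_trans Hi _. Qed.

Lemma gen_succ_lt (n : nat) (i : 'I_n.-1) : (val i).+1 < n.
Proof. by case: n i => [|n] [i /= Hi] //. Qed.

Definition gen_perm (n : nat) (i : 'I_n.-1) : 'S_n :=
  tperm (Ordinal (gen_lt i)) (Ordinal (gen_succ_lt i)).

Definition piL (n : nat) (w : word n) : 'S_n :=
  (\prod_(i <- w) gen_perm i)%g.

Definition inPL (n : nat) (w : word n) : Prop := piL w = 1%g.

(* Main.v *)
Require Import Defs.
From mathcomp Require Import all_boot all_fingroup.
From mathcomp Require Import zify.
Set Implicit Arguments. Unset Strict Implicit. Unset Printing Implicit Defensive.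

Fixpoint act (i : nat) (w : seq nat) : seq nat :=
  match w with
  | [::] => [:: i]
  | j :: w' =>
    if j == i then w'
    else if j.+1 == i then
      match w' with
      | k :: w'' => if k == i then j :: i :: act j w'' else i :: w
      | [::] => i :: w
      end
    else i :: w
  end.

Definition bad3 (a b c : nat) := (a == c) && (a == b.+1).

Fixpoint normal (w : seq nat) : bool :=
  match w with
  | a :: ((b :: w') as w1) =>
      [&& a != b, (match w' with c :: _ => ~~ bad3 a b c | [::] => true end) & normal w1]
  | _ => true
  end.

Lemma nSn0 i : (i.+1 == i) = false. Proof. by elim: i. Qed.
Lemma act_consE i c s : act i (c :: s) =
  if c == i then s else if (c.+1 == i) && (head i.+1 s == i) then c :: i :: act c (behead s)
  else i :: c :: s.
Proof.
rewrite /=; case: (c == i) => //; case: (c.+1 == i) => //=.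
case: s => [|d s] /=. by rewrite nSn0. by [].
Qed.

Arguments act : simpl never.
Lemma act_nil i : act i [::] = [:: i]. Proof. by []. Qed.
Lemma nSn i : (i.+1 == i) = false. Proof. by elim: i. Qed.
Lemma nnS i : (i == i.+1) = false. Proof. by elim: i. Qed.
Lemma nSSn i : (i.+2 == i) = false. Proof. by elim: i. Qed.
Lemma nnSS i : (i == i.+2) = false. Proof. by elim: i. Qed.

Ltac hyps := repeat match goal with
 | H : is_true (?a != ?b) |- context [?a == ?b] => rewrite (negbTE H)
 | H : is_true (?a != ?b) |- context [?b == ?a] => rewrite [b == a]eq_sym (negbTE H)
 end.
Ltac simp := repeat progress (rewrite ?act_nil ?act_consE /= ?eqxx ?eqSS ?nSn ?nnS ?nSSn ?nnSS /=; hyps).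

Lemma act_br (i : nat) (w : seq nat) : normal w ->
  act i (act i.+1 (act i w)) = act i.+1 (act i (act i.+1 w)).
Proof.
case: w => [|c s] Hn.
  by simp.
have nrm2 : forall a b t, normal (a :: b :: t) -> a != b.
  by move=> a b t /= /and3P [].
have nrm3 : forall a b e t, normal [:: a, b, e & t] -> ~~ bad3 a b e.
  by move=> a b e t /= /and3P [].
have nrmt : forall a t, normal (a :: t) -> normal t.
  by move=> a [|b [|e t]] //= /and3P [].
case: (eqVneq c i) => [Eci|Hci]; first subst c.
  case: s Hn => [|d s] Hn; first by simp.
  have Hdi : d != i by rewrite eq_sym; exact: nrm2 Hn.
  case: (eqVneq d i.+1) => [->|Hdk].
    by simp.
  by simp.
case: (eqVneq c i.+1) => [Eci|Hck]; first subst c.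
  case: s Hn => [|d s] Hn; first by simp.
  have Hdk : d != i.+1 by rewrite eq_sym; exact: nrm2 Hn.
  case: (eqVneq d i) => [Edi|Hdi]; first subst d.
    case: s Hn => [|e s] Hn; first by simp.
    have He1 : e != i.+1.
      by move: (nrm3 _ _ _ _ Hn); rewrite /bad3 eqxx andbT eq_sym.
    have He2 : e != i by rewrite eq_sym; exact: nrm2 _ _ _ (nrmt _ _ Hn).
    by simp.
  by simp; case: ifP => _; simp.
case: (eqVneq c.+1 i) => [Eci|Hci1]; first subst i.
  case: s Hn => [|d s] Hn; first by simp.
  case: (eqVneq d c.+1) => [Edi|Hdi]; first subst d.
    by simp.
  by simp.
by simp.
Qed.

Lemma nrm2 a b t : normal (a :: b :: t) -> a != b.
Proof. by case: t => [|e t] /=; [case/andP | case/and3P]. Qed.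
Lemma nrm3 a b e t : normal [:: a, b, e & t] -> ~~ bad3 a b e.
Proof. by move=> /= /and3P []. Qed.
Lemma nrmt a t : normal (a :: t) -> normal t.
Proof. by case: t => [|b [|e t]] //= /and3P []. Qed.
Lemma nrmE a b t : normal [:: a, b & t] =
  [&& a != b, (match t with e :: _ => ~~ bad3 a b e | [::] => true end) & normal (b :: t)].
Proof. by case: t => [|e t] //=; rewrite andbT. Qed.

Lemma act_cons i w : normal (i :: w) -> act i w = i :: w.
Proof.
case: w => [|d s] Hn; first by simp.
have Hd : d != i by rewrite eq_sym; exact: nrm2 Hn.
rewrite act_consE (negbTE Hd); case: s Hn => [|e s] Hn /=; first by rewrite nSn andbF.
case: (eqVneq d.+1 i) => [E|] //=; case: (eqVneq e i) => [E'|] //=.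
by move: (nrm3 Hn); rewrite /bad3 E E' !eqxx.
Qed.

Lemma act_inv i w : normal w -> act i (act i w) = w.
Proof.
move: {2}(size w) (leqnn (size w)) => n; elim: n i w => [|n IH] i w.
  by case: w => // _ _; simp.
case: w => [|c s] Hs Hn; first by simp.
rewrite [act i (c :: s)]act_consE.
case: (eqVneq c i) => [E|Hci]; first by subst c; rewrite act_cons.
case: (eqVneq c.+1 i) => [E|Hci1] /=; last by simp.
subst i; case: s Hs Hn => [|d s] Hs Hn /=; first by simp.
case: (eqVneq d c.+1) => [E|Hd] /=; last by simp.
subst d; rewrite act_consE /= nnS eqxx /= IH //.
  by move: Hs => /=; lia.
exact: (nrmt (nrmt Hn)).
Qed.

Lemma act_normal i w : normal w -> normal (act i w).
Proof.
move: {2}(size w) (leqnn (size w)) => n; elim: n i w => [|n IH] i w.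
  by case: w.
case: w => [|c s] Hs Hn; first by [].
rewrite act_consE.
case: (eqVneq c i) => [E|Hci]; first exact: nrmt Hn.
case: (eqVneq c.+1 i) => [E|Hci1]; last first.
  change (normal [:: i, c & s]); rewrite nrmE eq_sym Hci Hn andbT; case: s Hn {Hs} => // e s _; by rewrite /bad3 [i == c.+1]eq_sym (negbTE Hci1) andbF.
subst i; case: s Hs Hn => [|d s] Hs Hn /=.
  by rewrite eqSS nSn nrmE nSn.
case: (eqVneq d c.+1) => [E|Hd]; last first.
  by rewrite nrmE nSn Hn /bad3 eqxx andbT [c.+1 == d]eq_sym (negbTE Hd).
subst d.
have IHs : normal (act c s).
  by apply: IH; [move: Hs => /=; lia | exact: (nrmt (nrmt Hn))].
case: s Hs Hn IHs => [|e s] Hs Hn IHs.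
  by rewrite act_nil !nrmE nnS nSn /bad3 eqxx nnSS.
move: IHs; rewrite act_consE.
have He1 : e != c.+1 by rewrite eq_sym; exact: nrm2 (nrmt Hn).
case: (eqVneq e c) => [E|Hec].
  subst e => IHs.
  case: s Hn Hs IHs => [|f s] Hn Hs IHs; first by rewrite !nrmE nnS.
  have Hf1 : f != c by rewrite eq_sym; exact: nrm2 (nrmt (nrmt Hn)).
  have Hf2 : f != c.+1.
    by move: (nrm3 (nrmt Hn)); rewrite /bad3 eqxx andbT eq_sym.
  rewrite !nrmE nnS /bad3 [c == f]eq_sym (negbTE Hf1) [c.+1 == f]eq_sym (negbTE Hf2) IHs /=.
  by case: s {Hn Hs IHs} => // g s; rewrite eqSS [c == f]eq_sym (negbTE Hf1) andbF.

case: ifP => [/andP [/eqP E1 E2] | _] IHs.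
  by rewrite nrmE (nrmE c.+1 e) IHs nnS /bad3 [c == e]eq_sym (negbTE Hec) [c.+1 == e]eq_sym (negbTE He1) nSn.
by rewrite nrmE (nrmE c.+1 c) IHs nnS nSn /bad3 eqxx nnSS [c.+1 == e]eq_sym (negbTE He1).
Qed.

Lemma nrm_pre b e w : normal [:: b, e & w] -> normal [:: b; e].
Proof. by move/nrm2; rewrite nrmE andbT => ->. Qed.

Lemma La c w : normal (c :: w) = normal (c :: take 2 w) && normal w.
Proof.
case: w => [|b [|e w]]; [by [] | by rewrite andbT |].
rewrite [take _ _]/= take0 (nrmE c b (e :: w)) (nrmE c b [:: e]).
case H: (normal [:: b, e & w]); last by rewrite !andbF.
by rewrite (nrm_pre H) !andbT.
Qed.

Lemma nrm3E a b c t : normal [:: a, b, c & t] = normal [:: a; b; c] && normal [:: b, c & t].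
Proof. by rewrite La [take _ _]/= take0. Qed.

Lemma take2_cat (u : seq nat) a b v : take 2 (u ++ [:: a, b & v]) = take 2 (u ++ [:: a; b]).
Proof. by case: u => [|x [|y u]] /=; rewrite ?take0. Qed.

Lemma normal_catl u a b v : normal (u ++ [:: a; b]) -> normal [:: a, b & v] ->
  normal (u ++ [:: a, b & v]).
Proof.
elim: u => [|c u IH] // H1 H2.
rewrite cat_cons La take2_cat.
move: H1; rewrite cat_cons La => /andP [-> H1] /=.
exact: IH.
Qed.

Lemma take2_rcons (s : seq nat) c : 2 <= size s -> take 2 (rcons s c) = take 2 s.
Proof. by case: s => [|x [|y s]] //= _; rewrite !take0. Qed.

Lemma normal_snoc u a b c : normal (rcons (rcons u a) b) -> normal [:: a; b; c] ->
  normal (rcons (rcons (rcons u a) b) c).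
Proof.
elim: u => [|x u IH] H1 H2; first exact: H2.
rewrite rcons_cons in H1 *; move: H1; rewrite La => /andP [H0 H1].
rewrite La IH // andbT take2_rcons ?H0 //.
by rewrite !size_rcons.
Qed.

Definition natperm (a y : nat) := if y == a then a.+1 else if y == a.+1 then a else y.
Definition plcheck (X : seq nat) :=
  all (fun x => foldl (fun y a => natperm a y) x X == x) (iota 0 4).

Lemma condJ l p : l != p -> p != l.+1 -> forall y, y != l -> normal [:: y; l; p].
Proof.
move=> H1 H2 y Hy; rewrite nrmE Hy nrmE H1 /bad3 /=.
by case: (eqVneq y p) => // ->; rewrite (negbTE H2).
Qed.

Lemma condK q f : q != f -> q != f.+1 -> forall y, y != f -> normal [:: q; f; y].
Proof.
move=> H1 H2 y Hy; rewrite nrmE H1 nrmE eq_sym Hy /bad3 (negbTE H2) /=.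
by rewrite andbF.
Qed.

Ltac solve_case :=
  split; [by [] | by [] | by [] |
          split; (split; [by [] | first [apply: condJ; by [] | apply: condK; by []]]) |
          by []].

Lemma key f l : exists p p2 Xm q2 q,
  [/\ normal [:: p, p2 & Xm ++ [:: q2; q]], all (fun a => a < 3) [:: p, p2 & Xm ++ [:: q2; q]],
      plcheck [:: p, p2 & Xm ++ [:: q2; q]],
      (normal [:: l; p; p2] /\ (forall y, y != l -> normal [:: y; l; p])) /\
      (normal [:: q2; q; f] /\ (forall y, y != f -> normal [:: q; f; y])) &
      (p != f) || (q != l)].
Proof.
case: f => [|[|[|f]]]; case: l => [|[|[|l]]].
  - by exists 2, 0, [:: 1; 0; 2; 0; 2; 1], 0, 2; solve_case.
  - by exists 0, 2, [:: ], 0, 2; solve_case.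
  - by exists 1, 0, [:: 2; 0; 1; 0; 2; 0], 1, 2; solve_case.
  - by exists 0, 2, [:: ], 0, 2; solve_case.
  - by exists 2, 0, [:: ], 2, 0; solve_case.
  - by exists 0, 2, [:: 0; 1; 0; 2; 0; 2; 1; 0], 2, 0; solve_case.
  - by exists 0, 1, [:: 2; 1; 0; 2; 0; 1], 2, 0; solve_case.
  - by exists 2, 0, [:: ], 2, 0; solve_case.
  - by exists 2, 0, [:: 2; 0; 1; 2; 0; 2], 0, 1; solve_case.
  - by exists 0, 2, [:: 0; 1; 2; 1; 0; 2], 0, 1; solve_case.
  - by exists 0, 1, [:: 0; 2; 0; 2], 1, 0; solve_case.
  - by exists 2, 0, [:: ], 2, 0; solve_case.
  - by exists 2, 0, [:: ], 2, 0; solve_case.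
  - by exists 0, 2, [:: ], 0, 2; solve_case.
  - by exists 0, 2, [:: ], 0, 2; solve_case.
  - by exists 0, 2, [:: ], 0, 2; solve_case.
Qed.

Lemma normal_suffix u v : normal (u ++ v) -> normal v.
Proof. by elim: u => [|a u IH] // /nrmt. Qed.

Lemma normal_catZX Z p p2 Xr : normal Z -> normal [:: p, p2 & Xr] -> Z != [::] ->
  normal [:: last 0 Z; p; p2] -> (forall y, y != last 0 Z -> normal [:: y; last 0 Z; p]) ->
  normal (Z ++ [:: p, p2 & Xr]).
Proof.
move=> HZ HX; case/lastP: Z HZ => [|Y l] HZ // _; rewrite last_rcons => H1 H2.
apply: normal_catl => //.
case/lastP: Y HZ => [|Y y] HZ; first exact: H1.
have Hyl : y != l.
  by move: HZ; rewrite -!cats1 -catA => /normal_suffix /nrm2.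
have -> : forall (s : seq nat) a b, s ++ [:: a; b] = rcons (rcons s a) b.
  by move=> s a b; rewrite -!cats1 -catA.
apply: normal_snoc H1; apply: normal_snoc HZ _; exact: H2.
Qed.

Lemma normal_catXZ Xu q2 q f Z' : normal (Xu ++ [:: q2; q]) -> normal (f :: Z') ->
  normal [:: q2; q; f] -> (forall y, y != f -> normal [:: q; f; y]) ->
  normal (Xu ++ [:: q2, q, f & Z']).
Proof.
move=> HX HZ H1 H2; apply: normal_catl => //.
rewrite nrm3E H1 andTb.
case: Z' HZ => [|y Z'] HZ; first by move: H1 => /nrmt.
rewrite nrm3E HZ H2 //.
by rewrite eq_sym; exact: nrm2 HZ.
Qed.

Lemma foldr_normal t w : normal t -> normal (foldr act t w).
Proof. by move=> Ht; elim: w => [|a w IH] //=; apply: act_normal. Qed.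

Lemma foldr_id v t : normal (v ++ t) -> foldr act t v = v ++ t.
Proof.
elim: v => [|a v IH] //= H.
rewrite IH; last exact: nrmt H.
exact: act_cons.
Qed.

Lemma act_bound N i w : i < N -> all (fun x => x < N) w -> all (fun x => x < N) (act i w).
Proof.
move: {2}(size w) (leqnn (size w)) => n; elim: n i w => [|n IH] i w.
  by case: w => // _ /= ->.
case: w => [|c s] Hs Hi Hw; first by rewrite act_nil /= Hi.
move: Hw => /= /andP [Hc Hw].
rewrite act_consE; case: ifP => _; first done.
case: ifP => _ /=; last by rewrite Hi Hc.
rewrite Hc Hi /=; apply: IH => //.
  by case: s {Hw} Hs => //= x s; lia.
by case: s Hw {Hs} => //= x s /andP [].
Qed.

Lemma natperm_fix X y : all (fun a => a < 3) X -> 3 < y ->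
  foldl (fun y a => natperm a y) y X = y.
Proof.
elim: X y => [|a X IH] y //= /andP [Ha HX] Hy.
have -> : natperm a y = y.
  rewrite /natperm; case: eqP => [E|_]; first by lia.
  by case: eqP => [E|_] //; lia.
exact: IH.
Qed.

Section G.
Variable n : nat.
Implicit Types u v x y : word n.

Lemma Lrel_catl u x y : Lrel x y -> Lrel (u ++ x) (u ++ y).
Proof. by move=> H; have := Lrel_ctx u [::] H; rewrite !cats0. Qed.
Lemma Lrel_catr v x y : Lrel x y -> Lrel (x ++ v) (y ++ v).
Proof. by move=> H; exact: (Lrel_ctx [::] v H). Qed.
Lemma Lrel_cons (a : 'I_n.-1) x y : Lrel x y -> Lrel (a :: x) (a :: y).
Proof. exact: (Lrel_catl [:: a]). Qed.

Lemma Lrel_rev (w : word n) : Lrel (w ++ rev w) [::].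
Proof.
elim: w => [|a w IH] /=; first exact: Lrel_refl.
rewrite rev_cons -cats1 catA.
apply: Lrel_trans (Lrel_cons a (Lrel_catr [:: a] IH)) _.
exact: Lrel_inv.
Qed.

Lemma Lrel_nf u v : Lrel u v -> forall t, normal t ->
  foldr act t (map val u) = foldr act t (map val v).
Proof.
elim => {u v}.
- by [].
- by move=> u v _ IH t Ht; rewrite IH.
- by move=> u v w _ IH1 _ IH2 t Ht; rewrite IH1 // IH2.
- move=> u v a b _ IH t Ht; rewrite !map_cat !foldr_cat IH //.
  exact: foldr_normal.
- by move=> i t Ht /=; rewrite act_inv.
- by move=> i j E t Ht /=; rewrite E act_br.
Qed.
End G.

Section B.
Variable k : nat.
Notation W := (word k.+2).

Lemma map_val_inord (X : seq nat) : all (fun a => a < k.+1) X ->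
  map val (map (@inord k) X) = X.
Proof. by elim: X => [|a X IH] //= /andP [Ha HX]; rewrite inordK // IH. Qed.

Lemma step (i : 'I_k.+1) (v : seq nat) : all (fun x => x < k.+1) v ->
  @Lrel k.+2 (i :: map (@inord k) v) (map (@inord k) (act i v)).
Proof.
move: {2}(size v) (leqnn (size v)) => m; elim: m i v => [|m IH] i v.
  by case: v => // _ _; rewrite act_nil /= inord_val; exact: Lrel_refl.
case: v => [|c s] Hs Hv; first by rewrite act_nil /= inord_val; exact: Lrel_refl.
move: Hv => /= /andP [Hc Hv].
rewrite act_consE; case: (eqVneq c i) => [E|Hci].
  have -> : inord c = i by rewrite E inord_val.
  exact: (@Lrel_catr k.+2 _ _ _ (@Lrel_inv k.+2 i)).
case: (eqVneq c.+1 i) => [E|Hci1] /=; last by rewrite inord_val; exact: Lrel_refl.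
case: s Hs Hv => [|d s] Hs Hv /=; first by rewrite nSn /= inord_val; exact: Lrel_refl.
case: (eqVneq d i) => [Ed|Hd] /=; last by rewrite inord_val; exact: Lrel_refl.
move: Hv => /andP [_ Hv].
set jc : 'I_k.+1 := inord c.
have Ejc : val i = (val jc).+1 by rewrite /jc /= inordK.
have -> : inord d = i by rewrite Ed inord_val.
rewrite inord_val /behead.
apply: Lrel_trans.
  exact: (@Lrel_catr k.+2 (map (@inord k) s) _ _ (Lrel_sym (@Lrel_braid k.+2 jc i Ejc))).
apply: (@Lrel_cons k.+2 jc); apply: (@Lrel_cons k.+2 i).
have -> : c = val jc by rewrite /jc /= inordK.
apply: IH => //; move: Hs => /=; lia.
Qed.

Lemma foldr_bound (w : seq nat) : all (fun x => x < k.+1) w ->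
  all (fun x => x < k.+1) (foldr act [::] w).
Proof.
elim: w => [|a w IH] //= /andP [Ha Hw].
by apply: act_bound => //; exact: IH.
Qed.

Lemma nf_back (w : W) : Lrel w (map (@inord k) (foldr act [::] (map val w))).
Proof.
elim: w => [|a w IH] /=; first exact: Lrel_refl.
apply: Lrel_trans (Lrel_cons a IH) _.
apply: step; apply: foldr_bound.
by apply/allP => x /mapP [y _ ->]; exact: (ltn_ord y).
Qed.

Lemma piL_val (w : W) (x : 'I_k.+2) :
  val (piL w x) = foldl (fun y a => natperm a y) (val x) (map val w).
Proof.
elim: w x => [|a w IH] x; first by rewrite /piL big_nil perm1.
rewrite /piL big_cons permM -/(piL w) IH /=; congr foldl.
rewrite /gen_perm /natperm; case: tpermP => [->|->|Hx Hy] /=.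
- by rewrite eqxx.
- by rewrite nSn eqxx.
case: eqP => [E|_]; first by case: Hx; apply: val_inj.
case: eqP => [E|_] //; by case: Hy; apply: val_inj.
Qed.

Lemma inPL_X (X : seq nat) : 2 <= k -> all (fun a => a < 3) X -> plcheck X ->
  inPL (map (@inord k) X : W).
Proof.
move=> Hk HX HP; apply/permP => x; apply: val_inj.
have HX' : all (fun a => a < k.+1) X.
  by apply/allP => a Ha; move/allP: HX => /(_ a Ha); lia.
rewrite piL_val perm1 map_val_inord //.
case: (ltnP (val x) 4) => Hx.
  by move/allP: HP => /(_ (val x)); rewrite mem_iota /= => /(_ Hx) /eqP.
by apply: natperm_fix.
Qed.
End B.

Theorem theorem5p4 (n : nat) (hn : 4 <= n) (g h : word n) :
  (forall x : word n, inPL x ->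
     Lrel (Linv g ++ x ++ g) (Linv h ++ x ++ h)) ->
  Lrel g h.
Proof.
case: n hn g h => [|[|[|[|m]]]] // _ g h H.
set z := h ++ rev g.
have Hc : forall x : word m.+4, inPL x -> Lrel (z ++ x) (x ++ z).
  move=> x Hx; have H1 := Lrel_ctx h (rev g) (H x Hx); rewrite /Linv in H1.
  have E1 : h ++ ((rev g ++ x ++ g) ++ rev g) = (z ++ x) ++ (g ++ rev g) by rewrite /z !catA.
  have E2 : h ++ ((rev h ++ x ++ h) ++ rev g) = (h ++ rev h) ++ (x ++ z) by rewrite /z !catA.
  rewrite E1 E2 in H1.
  apply: Lrel_trans; last apply: Lrel_trans H1 _.
    by have := Lrel_sym (Lrel_catl (z ++ x) (Lrel_rev g)); rewrite cats0.
  exact: (Lrel_catr (x ++ z) (Lrel_rev h)).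
have Ez : z = h ++ rev g by [].
clearbody z.
pose Z := foldr act [::] (map val z).
have Hz : Lrel z (map (@inord m.+2) Z) := nf_back z.
have HZn : normal Z by apply: foldr_normal.
have HZb : all (fun a => a < m.+3) Z.
  by apply: foldr_bound; apply/allP => a /mapP [y _ ->]; exact: (ltn_ord y).
case/boolP: (Z == [::]) => HZe.
  move/eqP: HZe Hz => -> /= Hz.
  have Hg := Lrel_rev (rev g); rewrite revK in Hg.
  apply: Lrel_sym; apply: (@Lrel_trans _ _ (h ++ rev g ++ g)).
    by have := Lrel_sym (Lrel_catl h Hg); rewrite cats0.
  by rewrite catA -Ez; exact: (Lrel_catr g Hz).
have [p [p2 [Xm [q2 [q [HXn HX3 HXp [[J1 J2] [K1 K2]] Hd]]]]]] := key (head 0 Z) (last 0 Z).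
set X := [:: p, p2 & Xm ++ [:: q2; q]] in HXn HX3 HXp.
have HX3' : all (fun a => a < m.+3) X.
  by apply/allP => a Ha; move/allP: HX3 => /(_ a Ha); lia.
have HxPL : inPL (map (@inord m.+2) X : word m.+4) by apply: inPL_X.
have := Lrel_nf (Hc _ HxPL) (t := [::]) is_true_true.
rewrite !map_cat !foldr_cat map_val_inord // (foldr_id (t := [::])) ?cats0 //.
rewrite -/Z (Lrel_nf Hz HXn) map_val_inord // foldr_id; last exact: normal_catZX.
clearbody Z.
case: Z HZn HZe Hz HZb J1 J2 K1 K2 Hd => [|f Z'] // HZn _ _ _ J1 J2 K1 K2 Hd.
have EX : X ++ f :: Z' = [:: p, p2 & Xm] ++ [:: q2, q, f & Z'] by rewrite /X /= -catA.
rewrite foldr_id; last by rewrite EX; apply: (normal_catXZ (Xu := [:: p, p2 & Xm])).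
move=> E.
have Eh := congr1 (head 0) E; have El := congr1 (last 0) E.
rewrite /X /= in Eh.
rewrite /X !last_cat /= !last_cat /= in El.
by move: Hd; rewrite /= El -Eh !eqxx.
Qed.
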